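(* Let $\mathcal C,\mathcal D\subseteq\{0,1\}^n$ be neural codes. Then $CF(J_{\mathcal C\cup\mathcal D})=\{h_R : h\in MP(\mathcal C,\mathcal D)\}$.
   Context: All polynomials lie in $\mathbb F_2[x_1,\dots,x_n]$. A pseudo-monomial is a polynomial $\prod_{i\in\sigma}x_i\prod_{j\in\tau}(1-x_j)$ with $\sigma,\tau\subseteq[n]$, $\sigma\cap\tau=\emptyset$. For $v\in\{0,1\}^n$ let $\rho_v=\prod_{v_i=1}x_i\prod_{v_j=0}(1-x_j)$. For a code $\mathcal C\subseteq\{0,1\}^n$, the neural ideal is $J_\mathcal C=\langle\rho_v : v\in\{0,1\}^n\setminus\mathcal C\rangle$. A pseudo-monomial $f\in J_\mathcal C$ is minimal if there is no pseudo-monomial $g\in J_\mathcal C$ of smaller degree with $f=gh$ for some polynomial $h$; the canonical form $CF(J_\mathcal C)$ is the set of all minimal pseudo-monomials in $J_\mathcal C$. A polynomial is square-free if it is a sum of monomials $x^\alpha$ with all $\alpha_i\in\{0,1\}$; every polynomial $h$ has a unique square-free polynomial $h_R$ agreeing with it as a function on $\{0,1\}^n$ (equivalently, congruent to $h$ modulo $\langle x_i^2-x_i\rangle$). If $CF(J_\mathcal C)=\{f_1,\dots,f_r\}$ and $CF(J_\mathcal D)=\{g_1,\dots,g_s\}$, the set of reduced products is $P(\mathcal C,\mathcal D)=\{(f_ig_j)_R : i\in[r], j\in[s]\}$ and the minimal reduced products are $MP(\mathcal C,\mathcal D)=\{h\in P(\mathcal C,\mathcal D): h\neq0 \text{ and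 } h\neq fg \text{ for every } f\in P(\mathcal C,\mathcal D) \text{ and every polynomial } g\neq1\}$. *)

(* Defs.v *)
From HB Require Import structures.
From mathcomp Require Import all_boot all_algebra.
From mathcomp Require Import mpoly.

Set Implicit Arguments.
Unset Strict Implicit.
Unset Printing Implicit Defensive.

Import GRing.Theory.
Local Open Scope ring_scope.

Notation F2poly n := {mpoly 'F_2[n]}.

Notation word n := {ffun 'I_n -> bool}.

Notation code n := {set word n}.

Definition pm (n : nat) (sigma tau : {set 'I_n}) : F2poly n :=
  (\prod_(i in sigma) 'X_i) * (\prod_(j in tau) (1 - 'X_j)).

Definition is_pseudo_monomial (n : nat) (f : F2poly n) : Prop :=
  exists sigma tau : {set 'I_n}, [disjoint sigma & tau] /\ f = pm sigma tau.

Definition rho (n : nat) (v : word n) : F2poly n :=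
  pm [set i | v i] [set j | ~~ v j].

Definition in_neural_ideal (n : nat) (C : code n) (f : F2poly n) : Prop :=
  exists g : {ffun word n -> F2poly n},
    f = \sum_(v in ~: C) g v * rho v.

(* Total degree of a polynomial (of a nonzero one; msize p = 1 + deg p). *)
Definition tdeg (n : nat) (p : F2poly n) : nat := (msize p).-1.

Definition minimal_pm (n : nat) (C : code n) (f : F2poly n) : Prop :=
  is_pseudo_monomial f /\ in_neural_ideal C f /\
  ~ (exists g h : F2poly n, is_pseudo_monomial g /\ in_neural_ideal C g /\
        (tdeg g < tdeg f)%N /\ f = g * h).

Definition CF (n : nat) (C : code n) : F2poly n -> Prop := minimal_pm C.

(* Square-free reduction h_R: replace each monomial x^alpha by
   x^(min(alpha_i,1)), i.e. reduce modulo <x_i^2 - x_i>. *)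
Definition sqfree_mon (n : nat) (m : 'X_{1..n}) : 'X_{1..n} :=
  [multinom (minn (m i) 1%N) | i < n].

Definition reduce (n : nat) (p : F2poly n) : F2poly n :=
  \sum_(m <- msupp p) p@_m *: 'X_[sqfree_mon m].

Definition P_red (n : nat) (C D : code n) (h : F2poly n) : Prop :=
  exists f g : F2poly n, CF C f /\ CF D g /\ h = reduce (f * g).

Definition MP (n : nat) (C D : code n) (h : F2poly n) : Prop :=
  P_red C D h /\ h <> 0 /\
  (forall f g : F2poly n, P_red C D f -> g <> 1 -> h <> f * g).

(* Main.v *)
Require Import Defs.
From HB Require Import structures.
From mathcomp Require Import all_boot all_algebra.
From mathcomp Require Import mpoly.
From mathcomp Require Import zify.
From Stdlib Require Import Classical.
Set Implicit Arguments.
Unset Strict Implicit.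
Unset Printing Implicit Defensive.
Import GRing.Theory.
Local Open Scope ring_scope.

Section S.
Variable n : nat.
Implicit Types (p q : F2poly n) (v w : word n) (s t S T : {set 'I_n}).

Definition bpt v : 'I_n -> 'F_2 := fun i => (v i)%:R.
Definition cube s t v : bool := [forall i in s, v i] && [forall j in t, ~~ v j].

Lemma F2_cases (c : 'F_2) : c = 0 \/ c = 1.
Proof. case: c => [[|[|k]] Hk]; [left|right|]; try by apply/val_inj. by []. Qed.

Lemma prod_bool (I : finType) (P : pred I) (c : I -> bool) :
  \prod_(i | P i) ((c i)%:R : 'F_2) = ([forall i, P i ==> c i])%:R.
Proof.
case: (boolP [forall i, P i ==> c i]) => H /=.
  by rewrite big1 // => i Pi; move/forallP: H => /(_ i); rewrite Pi /= => ->.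
move/forallPn: H => [i]; rewrite negb_imply => /andP [Pi ci].
by rewrite (bigD1 i) //= (negbTE ci) mul0r.
Qed.

Lemma eval_pm s t v : (pm s t).@[bpt v] = (cube s t v)%:R.
Proof.
rewrite /pm mevalM !rmorph_prod /=.
under eq_bigr => i _ do rewrite mevalXU.
under [X in _ * X]eq_bigr => i _ do rewrite mevalB meval1 mevalXU /bpt.
have -> : \prod_(i in t) (1 - ((v i)%:R : 'F_2)) = \prod_(i in t) ((~~ v i)%:R : 'F_2).
  by apply: eq_bigr => i _; case: (v i); rewrite /= ?subr0 ?subrr.
rewrite /bpt !prod_bool -natrM /cube.
by case: forallP; case: forallP.
Qed.

Definition sfS (S : {set 'I_n}) p :=
  forall m, m \in msupp p -> forall i, (m i <= (i \in S))%N.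

Lemma sfS_mono S (S' : {set 'I_n}) p : S \subset S' -> sfS S p -> sfS S' p.
Proof.
move=> /subsetP sub H m mp i; apply: leq_trans (H m mp i) _.
by case iS: (i \in S) => //; rewrite (sub _ iS).
Qed.

Lemma sfS0 S : sfS S 0.
Proof. by move=> m; rewrite msupp0. Qed.

Lemma sfSD S p q : sfS S p -> sfS S q -> sfS S (p + q).
Proof.
move=> Hp Hq m /msuppD_le; rewrite mem_cat => /orP [] h; [exact: Hp|exact: Hq].
Qed.

Lemma sfSN S p : sfS S p -> sfS S (- p).
Proof. by move=> Hp m; rewrite (perm_mem (msuppN p)); apply: Hp. Qed.

Lemma sfSZ S c p : sfS S p -> sfS S (c *: p).
Proof. by move=> Hp m /msuppZ_le; apply: Hp. Qed.

Lemma sfS_sum S (I : finType) (P : pred I) (F : I -> F2poly n) :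
  (forall i, P i -> sfS S (F i)) -> sfS S (\sum_(i | P i) F i).
Proof.
move=> H; elim/big_ind: _ => //; [exact: sfS0| exact: sfSD].
Qed.

Lemma sfSM S T p q : [disjoint S & T] -> sfS S p -> sfS T q -> sfS (S :|: T) (p * q).
Proof.
move=> dST Hp Hq m /msuppM_le /allpairsP [[m1 m2] /= [m1p m2q ->]] i.
rewrite mnmDE in_setU.
have := Hp _ m1p i; have := Hq _ m2q i.
case iS: (i \in S); case iT: (i \in T) => //=.
  by move/disjointFr: dST => /(_ i iS); rewrite iT.
- by rewrite leqn0 => /eqP -> h; rewrite addn0.
- by move=> h; rewrite leqn0 => /eqP ->; rewrite add0n.
- by rewrite !leqn0 => /eqP -> /eqP ->.
Qed.

Lemma sfS_prod (s : {set 'I_n}) (F : 'I_n -> F2poly n) :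
  (forall i, i \in s -> sfS [set i] (F i)) -> sfS s (\prod_(i in s) F i).
Proof.
move=> H.
suff: forall r : seq 'I_n, uniq r -> {subset r <= s} ->
   sfS [set x in r] (\prod_(i <- r) F i).
  move=> /(_ (enum s) (enum_uniq _)) h.
  move: h; rewrite big_enum /=; move=> /(_ (fun x => ltac:(by rewrite mem_enum))); apply: sfS_mono.
  by apply/subsetP => x; rewrite inE mem_enum.
elim=> [|a r IH] /=.
  move=> _ _; rewrite big_nil => m; rewrite msupp1 inE => /eqP -> i.
  by rewrite mnm0E.
move=> /andP [ar ur] sub; rewrite big_cons.
have -> : [set x in a :: r] = [set a] :|: [set x in r].
  by apply/setP => x; rewrite !inE.
apply: sfSM; last first.
- by apply: IH => // x xr; apply: sub; rewrite inE xr orbT.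
- by apply: H; apply: sub; rewrite inE eqxx.
by rewrite disjoints1 inE.
Qed.


Lemma sfX i : sfS [set i] ('X_i : F2poly n).
Proof.
move=> m; rewrite msuppX inE => /eqP -> j; rewrite mnm1E inE eq_sym.
by case: (j == i).
Qed.

Lemma sf1X i : sfS [set i] (1 - 'X_i : F2poly n).
Proof.
move=> m /msuppB_le; rewrite mem_cat msupp1 msuppX !inE => /orP [] /eqP -> j.
  by rewrite mnm0E.
by rewrite mnm1E inE eq_sym; case: (j == i).
Qed.

Lemma sf_pm s t : [disjoint s & t] -> sfS setT (pm s t).
Proof.
move=> dst; apply: (@sfS_mono (s :|: t)); first exact: subsetT.
apply: sfSM => //; apply: sfS_prod => i _; [exact: sfX | exact: sf1X].
Qed.

Lemma mdeg_lt (m1 m2 : 'X_{1..n}) :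
  (forall i, m1 i <= m2 i)%N -> m1 != m2 -> (mdeg m1 < mdeg m2)%N.
Proof.
move=> le neq.
have [j hj] : exists j, (m1 j < m2 j)%N.
  apply/existsP; apply: contraR neq; rewrite negb_exists => /forallP H.
  apply/eqP/mnmP => i; apply/eqP; rewrite eqn_leq le /=.
  by move: (H i); rewrite -leqNgt.
rewrite !mdegE (bigD1 j) //= [X in (_ < X)%N](bigD1 j) //=.
by rewrite -addSn leq_add // leq_sum.
Qed.

Lemma sf_uniq p : sfS setT p -> (forall v, p.@[bpt v] = 0) -> p = 0.
Proof.
move=> sfp ev; apply/mpolyP => m; rewrite mcoeff0.
suff H: forall k m, (mdeg m < k)%N -> p@_m = 0 by exact: (H (mdeg m).+1).
elim=> [//|k IH] {}m ltm.
case mp: (m \in msupp p); last by apply: memN_msupp_eq0; rewrite mp.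
pose v : word n := [ffun i => m i != 0%N].
have := ev v; rewrite mevalE (bigD1_seq m) ?msupp_uniq //=.
have -> : \prod_i bpt v i ^+ m i = 1.
  apply: big1 => i _; rewrite /bpt ffunE.
  have := sfp m mp i; rewrite inE.
  by case: (m i) => [|[|//]] _ //=; rewrite expr1.
rewrite mulr1 big_seq_cond big1 ?addr0 // => m' /andP [m'p m'm].
case: (boolP [forall i, m' i <= m i]%N) => [/forallP le|].
  rewrite IH ?mul0r //; apply: leq_trans (mdeg_lt le m'm) _; exact: ltm.
move/forallPn => [i]; rewrite -ltnNge => lti.
rewrite (bigD1 i) //= /bpt ffunE.
have := sfp m' m'p i; rewrite inE.
move: lti; case: (m' i) => [//|[|//]] /=; rewrite ltnS leqn0 => /eqP -> _.
by rewrite /= expr1 mul0r mulr0.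
Qed.

Lemma sf_eq p q : sfS setT p -> sfS setT q ->
  (forall v, p.@[bpt v] = q.@[bpt v]) -> p = q.
Proof.
move=> sp sq ev; apply/eqP; rewrite -subr_eq0; apply/eqP/sf_uniq.
  by apply: sfSD => //; apply: sfSN.
by move=> v; rewrite mevalB ev subrr.
Qed.


Lemma reduce_sf p : sfS setT (reduce p).
Proof.
rewrite /reduce; elim/big_ind: _ => //; [exact: sfS0|exact: sfSD|].
move=> m _; apply: sfSZ => m'; rewrite msuppX inE => /eqP -> i.
by rewrite mnmE inE geq_minr.
Qed.

Lemma reduce_eval p v : (reduce p).@[bpt v] = p.@[bpt v].
Proof.
rewrite /reduce raddf_sum mevalE; apply: eq_bigr => m _.
rewrite [LHS]/= mevalZ mevalX; congr (_ * _); apply: eq_bigr => i _.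
rewrite mnmE /bpt; case: (m i) => [|k] //=.
by case: (v i); rewrite /= ?expr1n ?expr0n ?expr1.
Qed.

Lemma reduce_char p q : sfS setT q -> (forall v, q.@[bpt v] = p.@[bpt v]) ->
  reduce p = q.
Proof.
move=> sq ev; apply: sf_eq => // [|v]; first exact: reduce_sf.
by rewrite reduce_eval ev.
Qed.

Lemma rho_disj w : [disjoint [set i | w i] & [set j | ~~ w j]].
Proof. by rewrite -setI_eq0; apply/eqP/setP => i; rewrite !inE; case: (w i). Qed.

Lemma eval_rho w v : (rho w).@[bpt v] = (w == v)%:R.
Proof.
rewrite /rho eval_pm; congr ((nat_of_bool _)%:R).
apply/idP/eqP => [/andP [/forallP h1 /forallP h2]|<-].
  apply/ffunP => i; move: (h1 i) (h2 i); rewrite !inE.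
  by case: (w i) => /= h h'; [rewrite h | apply/esym/negbTE; apply: h'].
by apply/andP; split; apply/forallP => i; rewrite inE; case: (w i).
Qed.

Lemma ideal_eval (C : code n) f : in_neural_ideal C f ->
  forall c, c \in C -> f.@[bpt c] = 0.
Proof.
move=> [g ->] c cC; rewrite raddf_sum big1 // => v; rewrite inE => vC /=.
rewrite mevalM eval_rho; case: eqP => [e|_]; last by rewrite mulr0.
by move: vC; rewrite e cC.
Qed.

Definition vanish (C : code n) s t := forall c, c \in C -> ~~ cube s t c.

Lemma ideal_pm_vanish (C : code n) s t : in_neural_ideal C (pm s t) -> vanish C s t.
Proof.
move=> h c cC; move: (ideal_eval h cC); rewrite eval_pm.
by case: (cube s t c) => //= /eqP; rewrite oner_eq0.
Qed.

Lemma vanish_ideal (C : code n) s t : [disjoint s & t] -> vanish C s t ->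
  in_neural_ideal C (pm s t).
Proof.
move=> dst van.
exists [ffun v => ((cube s t v)%:R)%:MP].
apply: sf_eq; [exact: sf_pm| |].
  apply: sfS_sum => v _; rewrite ffunE mul_mpolyC; apply: sfSZ.
  rewrite /rho; apply: sf_pm; exact: rho_disj.
move=> c; rewrite eval_pm raddf_sum /=.
under eq_bigr => v _ do rewrite ffunE mevalM mevalC eval_rho.
case cC: (c \in C).
  rewrite big1; first by rewrite (negbTE (van c cC)).
  by move=> v; rewrite inE => vC; case: eqP => [e|]; [move: vC; rewrite e cC| rewrite mulr0].
rewrite (bigD1 c) ?inE ?cC //= eqxx mulr1 big1 ?addr0 // => v /andP [_ vc].
by rewrite (negbTE vc) mulr0.
Qed.


Lemma cube_ind s t : [disjoint s & t] -> cube s t [ffun i => i \in s].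
Proof.
move=> dst; apply/andP; split; apply/forallP => i; rewrite ffunE; apply/implyP=> // it.
by apply/negP => is_; move/disjointFr: dst => /(_ i is_); rewrite it.
Qed.

Lemma pm_ne0 s t : [disjoint s & t] -> pm s t != 0.
Proof.
move=> dst; apply/negP => /eqP h.
have := eval_pm s t [ffun i => i \in s]; rewrite h meval0 cube_ind //; try by move/eqP; rewrite eq_sym oner_eq0.
Qed.

Lemma cubeU s1 t1 s2 t2 v :
  cube (s1 :|: s2) (t1 :|: t2) v = cube s1 t1 v && cube s2 t2 v.
Proof.
rewrite /cube; apply/idP/idP.
  move=> /andP [/forallP h1 /forallP h2].
  by apply/andP; split; apply/andP; split; apply/forallP => i; apply/implyP => hi;
    [move: (h1 i)|move: (h2 i)|move: (h1 i)|move: (h2 i)]; rewrite !inE hi ?orbT.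
move=> /andP [/andP [/forallP a /forallP b] /andP [/forallP c /forallP d]].
apply/andP; split; apply/forallP => i; rewrite inE; apply/implyP => /orP [] hi.
- exact: (implyP (a i) hi).
- exact: (implyP (c i) hi).
- exact: (implyP (b i) hi).
- exact: (implyP (d i) hi).
Qed.

Lemma cube_sub s t s' t' : [disjoint s & t] ->
  (forall v, cube s t v -> cube s' t' v) -> s' \subset s /\ t' \subset t.
Proof.
move=> dst H; split; apply/subsetP => i hi; apply/negPn/negP => ni.
  have /andP [/forallP h _] := H _ (cube_ind dst).
  by move: (implyP (h i) hi); rewrite ffunE (negbTE ni).
pose v : word n := [ffun k => (k \in s) || (k == i)].
have cv : cube s t v.
  apply/andP; split; apply/forallP => k; rewrite ffunE; apply/implyP => hk.
    by rewrite hk.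
  apply/norP; split; last by apply/eqP => e; move: hk; rewrite e (negbTE ni).
  by apply/negP => ks; move/disjointFr: dst => /(_ k ks); rewrite hk.
have /andP [_ /forallP h] := H _ cv.
by move: (implyP (h i) hi); rewrite ffunE eqxx orbT.
Qed.

Lemma pm_div s t s' t' h : [disjoint s & t] -> pm s t = pm s' t' * h ->
  s' \subset s /\ t' \subset t.
Proof.
move=> dst e; apply: cube_sub => // v cv.
have := eval_pm s t v; rewrite e cv mevalM eval_pm.
by case: (cube s' t' v) => //=; rewrite mul0r => /eqP; rewrite eq_sym oner_eq0.
Qed.

Lemma pm_split s t s' t' : s' \subset s -> t' \subset t ->
  pm s t = pm s' t' * pm (s :\: s') (t :\: t').
Proof.
move=> ss tt; rewrite /pm (big_setID s') (big_setID t' (A := t)).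
by rewrite (setIidPr ss) (setIidPr tt) mulrACA.
Qed.

Lemma pm_ne1 s t : (s != set0) || (t != set0) -> pm s t != 1.
Proof.
move=> /orP [] /set0Pn [i hi]; apply/negP => /eqP e.
  have := eval_pm s t [ffun=> false]; rewrite e meval1.
  case: (cube s t _) / andP => [[/forallP h _]|_].
    by move: (implyP (h i) hi); rewrite ffunE.
  by move/eqP; rewrite oner_eq0.
have := eval_pm s t [ffun=> true]; rewrite e meval1.
case: (cube s t _) / andP => [[_ /forallP h]|_].
  by move: (implyP (h i) hi); rewrite ffunE.
by move/eqP; rewrite oner_eq0.
Qed.

Lemma tdeg_lt (a b : F2poly n) : a != 0 -> b != 0 -> b != 1 -> (tdeg a < tdeg (a * b))%N.
Proof.
move=> a0 b0 b1; rewrite /tdeg msizeM //.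
have ma : (0 < msize a)%N by rewrite lt0n msize_poly_eq0.
have mb : (1 < msize b)%N.
  rewrite ltn_neqAle lt0n msize_poly_eq0 b0 andbT eq_sym.
  apply/negP => /msize_poly1P [c c0 e]; move/negP: b1; apply.
  by case: (F2_cases c) c0 e => -> // _ ->.
rewrite -!subn1; move: ma mb; move: (mmeasure mdeg a) (mmeasure mdeg b) => x y; lia.
Qed.

Lemma reduce_pm s t : [disjoint s & t] -> reduce (pm s t) = pm s t.
Proof. by move=> dst; apply: reduce_char => //; exact: sf_pm. Qed.

Lemma disjU s1 t1 s2 t2 : [disjoint s1 & t1] -> [disjoint s2 & t2] ->
  [disjoint s1 & t2] -> [disjoint s2 & t1] -> [disjoint s1 :|: s2 & t1 :|: t2].
Proof.
rewrite -!setI_eq0 => /eqP a /eqP b /eqP c /eqP d.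
by rewrite setIUl !setIUr a b c d !setU0.
Qed.

Lemma reduce_pmM s1 t1 s2 t2 : [disjoint s1 & t1] -> [disjoint s2 & t2] ->
  reduce (pm s1 t1 * pm s2 t2) =
  if [disjoint s1 & t2] && [disjoint s2 & t1] then pm (s1 :|: s2) (t1 :|: t2) else 0.
Proof.
move=> d1 d2; case: ifP => [/andP [d3 d4]|nd].
  apply: reduce_char; first by apply: sf_pm; apply: disjU.
  by move=> v; rewrite eval_pm mevalM !eval_pm cubeU; case: (cube s1 t1 v); rewrite /= ?mul1r ?mul0r.
apply: reduce_char; first exact: sfS0.
move=> v; rewrite mevalM !eval_pm meval0.
case c1: (cube s1 t1 v); case c2: (cube s2 t2 v); rewrite ?mul0r ?mulr0 //.
exfalso; move/negP: nd; apply; move: c1 c2 => /andP [/forallP a /forallP b] /andP [/forallP c /forallP d].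
apply/andP; split; rewrite -setI_eq0; apply/eqP/setP => i; rewrite !inE;
  apply/negP => /andP [h1 h2].
  by move: (implyP (a i) h1) (implyP (d i) h2) => ->.
by move: (implyP (c i) h1) (implyP (b i) h2) => ->.
Qed.


Lemma disj_sub s t s' t' : s' \subset s -> t' \subset t -> [disjoint s & t] ->
  [disjoint s' & t'].
Proof.
exact: disjointW.
Qed.

Lemma cube_mono s t s' t' v : s' \subset s -> t' \subset t -> cube s t v -> cube s' t' v.
Proof.
move=> /subsetP ss /subsetP tt /andP [/forallP a /forallP b].
apply/andP; split; apply/forallP => i; apply/implyP => hi.
  exact: (implyP (a i) (ss i hi)).
exact: (implyP (b i) (tt i hi)).
Qed.

Lemma vanish_mono (C : code n) s t s' t' : s' \subset s -> t' \subset t ->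
  vanish C s' t' -> vanish C s t.
Proof.
move=> ss tt van c cC; apply/negP => cc.
by move/negP: (van c cC); apply; apply: cube_mono cc.
Qed.

Lemma vanishU (C D : code n) s t :
  vanish (C :|: D) s t <-> vanish C s t /\ vanish D s t.
Proof.
split => [h|[h1 h2]].
  by split => c cC; apply: h; rewrite inE cC ?orbT.
by move=> c; rewrite inE => /orP []; [apply: h1|apply: h2].
Qed.

Lemma vanish_U2 (C D : code n) s1 t1 s2 t2 : vanish C s1 t1 -> vanish D s2 t2 ->
  vanish (C :|: D) (s1 :|: s2) (t1 :|: t2).
Proof.
move=> h1 h2; apply/vanishU; split.
  by apply: (vanish_mono _ _ h1); rewrite subsetUl.
by apply: (vanish_mono _ _ h2); rewrite subsetUr.
Qed.

Lemma CF_pm (C : code n) f : CF C f ->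
  exists s t, [/\ [disjoint s & t], f = pm s t & vanish C s t].
Proof.
move=> [[s [t [dst ef]]] [idf _]]; exists s, t; split => //.
by apply: ideal_pm_vanish; rewrite -ef.
Qed.

Lemma exists_min (C : code n) s t : [disjoint s & t] -> vanish C s t ->
  exists s1 t1, [/\ s1 \subset s, t1 \subset t & CF C (pm s1 t1)].
Proof.
suff H : forall k s t, (tdeg (pm s t) < k)%N -> [disjoint s & t] -> vanish C s t ->
  exists s1 t1, [/\ s1 \subset s, t1 \subset t & CF C (pm s1 t1)].
  by apply: (H (tdeg (pm s t)).+1).
elim=> [//|k IH] {}s {}t lt dst van.
case: (Classical_Prop.classic (CF C (pm s t))) => [cf|ncf].
  by exists s, t; split.
have : exists g h : F2poly n, is_pseudo_monomial g /\ in_neural_ideal C g /\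
        (tdeg g < tdeg (pm s t))%N /\ pm s t = g * h.
  apply: Classical_Prop.NNPP => ne; apply: ncf; split; first by exists s, t.
  by split => //; apply: vanish_ideal.
move=> [g [h [[s' [t' [d' eg]]] [ig [ltg e]]]]].
rewrite eg in e; have [ss tt] := pm_div dst e.
have [s1 [t1 [h1 h2 h3]]] : exists s1 t1, [/\ s1 \subset s', t1 \subset t' & CF C (pm s1 t1)].
  apply: IH => //; first by rewrite -eg; apply: leq_trans ltg _.
  by apply: ideal_pm_vanish; rewrite -eg.
by exists s1, t1; split => //; apply: subset_trans; eassumption.
Qed.


Lemma dirA (C D : code n) f : CF (C :|: D) f ->
  exists h : F2poly n, MP C D h /\ f = reduce h.
Proof.
move=> Hf; have [[s [t [dst ef]]] [idf nmin]] := Hf.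
have van : vanish (C :|: D) s t by apply: ideal_pm_vanish; rewrite -ef.
have [vC' vD'] := proj1 (vanishU C D s t) van.
have [s1 [t1 [hs1 ht1 cf1]]] := exists_min dst vC'.
have [s2 [t2 [hs2 ht2 cf2]]] := exists_min dst vD'.
have d1 : [disjoint s1 & t1] by apply: disj_sub dst.
have d2 : [disjoint s2 & t2] by apply: disj_sub dst.
have d3 : [disjoint s1 & t2] by apply: disj_sub dst.
have d4 : [disjoint s2 & t1] by apply: disj_sub dst.
have ss : s1 :|: s2 \subset s by rewrite subUset hs1 hs2.
have tt : t1 :|: t2 \subset t by rewrite subUset ht1 ht2.
have dU := disjU d1 d2 d3 d4.
have eh : reduce (pm s1 t1 * pm s2 t2) = pm (s1 :|: s2) (t1 :|: t2).
  by rewrite reduce_pmM // d3 d4.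
have vU : vanish (C :|: D) (s1 :|: s2) (t1 :|: t2).
  by apply: vanish_U2; apply: ideal_pm_vanish; [exact: cf1.2.1|exact: cf2.2.1].
have [ns|ns] := boolP ((s :\: (s1 :|: s2) != set0) || (t :\: (t1 :|: t2) != set0)).
  exfalso; apply: nmin; exists (pm (s1 :|: s2) (t1 :|: t2)).
  exists (pm (s :\: (s1 :|: s2)) (t :\: (t1 :|: t2))).
  have dD : [disjoint s :\: (s1 :|: s2) & t :\: (t1 :|: t2)].
    by apply: disj_sub dst; apply: subsetDl.
  split; first by exists (s1 :|: s2), (t1 :|: t2).
  split; first by apply: vanish_ideal.
  rewrite ef (pm_split ss tt); split => //.
  by apply: tdeg_lt; [apply: pm_ne0|apply: pm_ne0|apply: pm_ne1].
move: ns; rewrite negb_or !negbK !setD_eq0 => /andP [ss' tt'].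
have es : s1 :|: s2 = s by apply/eqP; rewrite eqEsubset ss ss'.
have et : t1 :|: t2 = t by apply/eqP; rewrite eqEsubset tt tt'.
rewrite es et in eh.
exists (pm s t); split; last by rewrite ef reduce_pm.
split; first by exists (pm s1 t1), (pm s2 t2).
split; first exact/eqP/pm_ne0.
move=> f' g' [a [b [cfa [cfb ef']]]] g1 e.
have [sa [ta [da ea va]]] := CF_pm cfa.
have [sb [tb [db eb vb]]] := CF_pm cfb.
move: ef'; rewrite ea eb reduce_pmM //.
case: ifP => [/andP [d5 d6]|_] ef'; last first.
  by move/eqP: (pm_ne0 dst); rewrite e ef' mul0r.
have dab := disjU da db d5 d6.
rewrite ef' in e.
have g0 : g' != 0 by apply/negP => /eqP g0; move/eqP: (pm_ne0 dst); rewrite e g0 mulr0.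
apply: nmin; exists (pm (sa :|: sb) (ta :|: tb)), g'.
split; first by exists (sa :|: sb), (ta :|: tb).
split; first by apply: vanish_ideal => //; apply: vanish_U2.
rewrite ef e; split => //.
by apply: tdeg_lt => //; [apply: pm_ne0|apply/eqP].
Qed.


Lemma dirB (C D : code n) f : (exists h : F2poly n, MP C D h /\ f = reduce h) ->
  CF (C :|: D) f.
Proof.
move=> [h [[[a [b [cfa [cfb eh]]]] [h0 hmin]] ef]].
have [sa [ta [da ea va]]] := CF_pm cfa.
have [sb [tb [db eb vb]]] := CF_pm cfb.
move: eh; rewrite ea eb reduce_pmM //.
case: ifP => [/andP [d5 d6]|_] eh; last by rewrite eh in h0.
have dst := disjU da db d5 d6.
set s := sa :|: sb in eh dst; set t := ta :|: tb in eh dst.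
have vst : vanish (C :|: D) s t by apply: vanish_U2.
rewrite ef eh reduce_pm //.
split; first by exists s, t.
split; first exact: vanish_ideal.
move=> [g [k [[s' [t' [d' eg]]] [ig [lt e]]]]].
rewrite eg in e; have [ss tt] := pm_div dst e.
have van' : vanish (C :|: D) s' t' by apply: ideal_pm_vanish; rewrite -eg.
have [vC vD] := proj1 (vanishU C D s' t') van'.
have [s1 [t1 [hs1 ht1 cf1]]] := exists_min d' vC.
have [s2 [t2 [hs2 ht2 cf2]]] := exists_min d' vD.
have d1 : [disjoint s1 & t1] by apply: disj_sub d'.
have d2 : [disjoint s2 & t2] by apply: disj_sub d'.
have d3 : [disjoint s1 & t2] by apply: disj_sub d'.
have d4 : [disjoint s2 & t1] by apply: disj_sub d'.
have ss1 : s1 :|: s2 \subset s' by rewrite subUset hs1 hs2.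
have tt1 : t1 :|: t2 \subset t' by rewrite subUset ht1 ht2.
have eh' : reduce (pm s1 t1 * pm s2 t2) = pm (s1 :|: s2) (t1 :|: t2).
  by rewrite reduce_pmM // d3 d4.
have [ns|ns] := boolP ((s :\: (s1 :|: s2) != set0) || (t :\: (t1 :|: t2) != set0)).
  apply: (hmin (pm (s1 :|: s2) (t1 :|: t2)) (pm (s :\: (s1 :|: s2)) (t :\: (t1 :|: t2)))).
  - by exists (pm s1 t1), (pm s2 t2).
  - exact/eqP/pm_ne1.
  - by rewrite eh; apply: pm_split; apply: subset_trans; eassumption.
move: ns; rewrite negb_or !negbK !setD_eq0 => /andP [ss' tt'].
have es : s' = s by apply/eqP; rewrite eqEsubset ss (subset_trans ss' ss1).
have et : t' = t by apply/eqP; rewrite eqEsubset tt (subset_trans tt' tt1).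
by move: lt; rewrite eg es et ltnn.
Qed.

End S.

Theorem lemma9 (n : nat) (C D : code n) (f : F2poly n) :
  CF (C :|: D) f <-> exists h : F2poly n, MP C D h /\ f = reduce h.
Proof. by split; [apply: dirA | apply: dirB]. Qed.
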